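(* Let $n,m$ be positive integers, $A_1,\dots,A_m\in\mathbb{S}_n$, $\mathcal{A}(X)=(\langle A_i,X\rangle)_{i=1}^m$, $\mathcal{A}^*(y)=\sum_i y_iA_i$, with $\mathcal{A}\mathcal{A}^*$ invertible; let $b\in\mathbb{R}^m$, $C\in\mathbb{S}_n$, $D:=\mathcal{A}^*((\mathcal{A}\mathcal{A}^* )^{-1}b)$. Fix $\sigma_k>0$, $y^k\in\mathbb{R}^m$, $\widetilde{X}^k\in\mathbb{S}_n$, and let $$\Phi_k(S)=\langle D,S+C\rangle-\langle\widetilde{X}^k,\mathcal{A}^*(y^k)-S-C\rangle+\tfrac{\sigma_k}{2}\|\mathcal{A}^*(y^k)-S-C\|^2,\quad S\in\mathbb{S}_n,$$ so that $\nabla\Phi_k(S)=\widetilde{X}^k-\sigma_k(\mathcal{A}^*(y^k)-S-C)+D$. For each positive integer $q$ let $\mathcal{N}_q=\{Y\in\mathbb{R}^{n\times q}: \text{every row of }Y\text{ has Euclidean norm }1\}$ and $\Psi_k(Y)=\Phi_k(YY^{\intercal})$ for $Y\in\mathcal{N}_q$. Let $p$ be a positive integer, $Y\in\mathcal{N}_p$, $S=YY^{\intercal}$, and $X=\nabla\Phi_k(S)-\operatorname{Diag}(\nabla\Phi_k(S)S)$, and suppose $X\not\succeq0$. Let $\delta$ be a positive integer and let $V\in\mathbb{R}^{n\times\delta}$ be a matrix whose columns are eigenvectors of $X$ corresponding to negative eigenvalues. Set $\hat Y=[Y,\,0_{n\times\delta}]\in\mathcal{N}_{p+\delta}$ and $U=[0_{n\times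 p},\,V]$. Then $U$ is a tangent vector to $\mathcal{N}_{p+\delta}$ at $\hat Y$ and it is a second-order descent direction of $\Psi_k$ on $\mathcal{N}_{p+\delta}$ at $\hat Y$, namely $$\langle U,\operatorname{grad}\Psi_k(\hat Y)\rangle=0,\qquad\langle U,\operatorname{Hess}\Psi_k(\hat Y)[U]\rangle<0.$$
   Context: $\mathbb{S}_n$ denotes real symmetric $n\times n$ matrices, $\langle A,B\rangle=\mathrm{Tr}(A^{\intercal}B)$, $\|\cdot\|$ the Frobenius norm. For a square matrix $M$, $\operatorname{Diag}(M)$ is the diagonal matrix having the same diagonal as $M$. $\mathcal{N}_q$ (the oblique manifold) is regarded as a Riemannian submanifold of $\mathbb{R}^{n\times q}$ with the Frobenius inner product; $\operatorname{grad}$ and $\operatorname{Hess}$ denote the Riemannian gradient and Riemannian Hessian with respect to this induced metric. The tangent space at $Y$ is $\{U: \operatorname{diag}(UY^{\intercal})=0\}$. *)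

(* Defs.v *)
From HB Require Import structures.
From mathcomp Require Import all_boot all_order all_algebra.
From mathcomp Require Import all_classical all_reals all_analysis.
Set Implicit Arguments. Unset Strict Implicit. Unset Printing Implicit Defensive.
Import Order.TTheory GRing.Theory Num.Theory.
Import numFieldNormedType.Exports.
Local Open Scope ring_scope.

Section Defs.
Variable R : realType.

Definition frob {m n : nat} (A B : 'M[R]_(m, n)) : R := \tr (A^T *m B).
Definition frobn2 {m n : nat} (A : 'M[R]_(m, n)) : R := frob A A.

Definition Diag {n : nat} (M : 'M[R]_n) : 'M[R]_n :=
  \matrix_(i, j) (if i == j then M i j else 0).

Definition symmx {n : nat} (M : 'M[R]_n) : Prop := M^T = M.

Definition psd {n : nat} (M : 'M[R]_n) : Prop :=
  forall v : 'cV[R]_n, 0 <= (v^T *m M *m v) 0 0.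

Definition oblique {n q : nat} (Y : 'M[R]_(n, q)) : Prop :=
  forall i : 'I_n, \sum_(j < q) (Y i j) ^+ 2 = 1.

Definition tangent {n q : nat} (Y U : 'M[R]_(n, q)) : Prop :=
  forall i : 'I_n, (U *m Y^T) i i = 0.

Definition projT {n q : nat} (Y Z : 'M[R]_(n, q)) : 'M[R]_(n, q) :=
  Z - Diag (Z *m Y^T) *m Y.

Definition egrad {n q : nat} (f : 'M[R]_(n, q) -> R) (Y : 'M[R]_(n, q))
  : 'M[R]_(n, q) := \matrix_(i, j) ('D_(delta_mx i j) f Y).

Definition rgrad {n q : nat} (f : 'M[R]_(n, q) -> R) (Y : 'M[R]_(n, q))
  : 'M[R]_(n, q) := projT Y (egrad f Y).

(* Riemannian Hessian on the Riemannian submanifold N_q (Levi-Civita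
   connection of the induced metric): Hess f(Y)[U] = P_Y( D(grad f)(Y)[U] ),
   where grad f is extended to the ambient space by Z |-> P_Z(egrad f Z). *)
Definition rhess {n q : nat} (f : 'M[R]_(n, q) -> R) (Y U : 'M[R]_(n, q))
  : 'M[R]_(n, q) := projT Y ('D_U (fun Z => projT Z (egrad f Z)) Y).

Definition Astar {n m : nat} (A : 'I_m -> 'M[R]_n) (y : 'cV[R]_m) : 'M[R]_n :=
  \sum_(i < m) y i 0 *: A i.

Definition AAstar {n m : nat} (A : 'I_m -> 'M[R]_n) : 'M[R]_m :=
  \matrix_(i, j) frob (A i) (A j).

Definition Dmat {n m : nat} (A : 'I_m -> 'M[R]_n) (b : 'cV[R]_m) : 'M[R]_n :=
  Astar A (invmx (AAstar A) *m b).

Definition Phi {n m : nat} (A : 'I_m -> 'M[R]_n) (b : 'cV[R]_m) (C : 'M[R]_n)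
  (sigma : R) (y : 'cV[R]_m) (Xt : 'M[R]_n) (S : 'M[R]_n) : R :=
  frob (Dmat A b) (S + C) - frob Xt (Astar A y - S - C)
  + sigma / 2 * frobn2 (Astar A y - S - C).

Definition gradPhi {n m : nat} (A : 'I_m -> 'M[R]_n) (b : 'cV[R]_m) (C : 'M[R]_n)
  (sigma : R) (y : 'cV[R]_m) (Xt : 'M[R]_n) (S : 'M[R]_n) : 'M[R]_n :=
  Xt - sigma *: (Astar A y - S - C) + Dmat A b.

Definition Psi {n m q : nat} (A : 'I_m -> 'M[R]_n) (b : 'cV[R]_m) (C : 'M[R]_n)
  (sigma : R) (y : 'cV[R]_m) (Xt : 'M[R]_n) (Y : 'M[R]_(n, q)) : R :=
  Phi A b C sigma y Xt (Y *m Y^T).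

End Defs.

(* Main.v *)
Require Import Defs.
From HB Require Import structures.
From mathcomp Require Import all_boot all_order all_algebra.
From mathcomp Require Import all_classical all_reals all_analysis.
From mathcomp Require Import ring lra.
Import Order.TTheory GRing.Theory Num.Theory.
Import numFieldNormedType.Exports.
Local Open Scope ring_scope.
Set Implicit Arguments. Unset Strict Implicit. Unset Printing Implicit Defensive.

Section DD.
Variables (R : realType) (V : normedModType R).

Definition dd (W : normedModType R) (F : V -> W) (x v : V) (d : W) := is_derive x v F d.

Lemma dd_D (W : normedModType R) (F : V -> W) x v d : dd F x v d -> 'D_v F x = d.
Proof. by move=> H; rewrite /dd in H; exact: derive_val. Qed.

Lemma dd_eq (W : normedModType R) (F : V -> W) x v d d' : dd F x v d -> d = d' -> dd F x v d'.
Proof. by move=> H <-. Qed.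

Lemma dd_cst (W : normedModType R) (c : W) x v : dd (fun _ => c) x v 0.
Proof. exact: is_derive_cst. Qed.

Lemma dd_id x v : dd (fun z => z) x v v.
Proof. exact: is_derive_id. Qed.

Lemma dd_add (W : normedModType R) (F G : V -> W) x v a b :
  dd F x v a -> dd G x v b -> dd (fun z => F z + G z) x v (a + b).
Proof. move=> ??; exact: is_deriveD. Qed.

Lemma dd_opp (W : normedModType R) (F : V -> W) x v a :
  dd F x v a -> dd (fun z => - F z) x v (- a).
Proof. move=> ?; exact: is_deriveN. Qed.

Lemma dd_sub (W : normedModType R) (F G : V -> W) x v a b :
  dd F x v a -> dd G x v b -> dd (fun z => F z - G z) x v (a - b).
Proof. move=> ??; exact: is_deriveB. Qed.

Lemma dd_scale (W : normedModType R) (k : R) (F : V -> W) x v a :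
  dd F x v a -> dd (fun z => k *: F z) x v (k *: a).
Proof. move=> ?; exact: is_deriveZ. Qed.

Lemma dd_mulR (F G : V -> R) x v a b :
  dd F x v a -> dd G x v b -> dd (fun z => F z * G z) x v (F x * b + G x * a).
Proof. move=> ??; exact: is_deriveM. Qed.

Lemma dd_sum (W : normedModType R) k (F : 'I_k -> V -> W) x v a :
  (forall i, dd (F i) x v (a i)) -> dd (fun z => \sum_(i < k) F i z) x v (\sum_(i < k) a i).
Proof. move=> H; rewrite -fct_sumE; exact: is_derive_sum. Qed.

Lemma dd_entry p q (F : V -> 'M[R]_(p, q)) x v (a : 'M[R]_(p, q)) i j :
  dd F x v a -> dd (fun z => F z i j) x v (a i j).
Proof.
move=> [H1 H2]; split; first by move/derivable_mxP: H1; apply.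
by rewrite derive_mx // in H2; rewrite -H2 mxE.
Qed.

Lemma dd_mx p q (F : V -> 'M[R]_(p, q)) x v (a : 'M[R]_(p, q)) :
  (forall i j, dd (fun z => F z i j) x v (a i j)) -> dd F x v a.
Proof.
move=> H; have Hd : derivable F x v by apply/derivable_mxP => i j; case: (H i j).
split=> //; rewrite derive_mx //; apply/matrixP => i j; rewrite mxE.
by case: (H i j).
Qed.

End DD.

Section DD2.
Variables (R : realType) (V : normedModType R).

Lemma dd_mulmx a b c (F : V -> 'M[R]_(a, b)) (G : V -> 'M[R]_(b, c)) x v dF dG :
  dd F x v dF -> dd G x v dG ->
  dd (fun z => F z *m G z) x v (dF *m G x + F x *m dG).
Proof.
move=> HF HG; apply: dd_mx => i j.
have -> : (fun z => (F z *m G z) i j) = fun z => \sum_k F z i k * G z k j.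
  by apply/funext => z; rewrite mxE.
apply: dd_eq.
  apply: (@dd_sum _ _ _ _ _ _ _ (fun k => F x i k * dG k j + G x k j * dF i k)) => k.
  by apply: dd_mulR; apply: dd_entry.
rewrite !mxE -big_split /=; apply: eq_bigr => k _.
by rewrite addrC [G x k j * _]mulrC.
Qed.

Lemma dd_tr a b (F : V -> 'M[R]_(a, b)) x v dF :
  dd F x v dF -> dd (fun z => (F z)^T) x v dF^T.
Proof.
move=> HF; apply: dd_mx => i j.
have -> : (fun z => (F z)^T i j) = fun z => F z j i.
  by apply/funext => z; rewrite mxE.
by rewrite mxE; apply: dd_entry.
Qed.

Lemma dd_Diag a (F : V -> 'M[R]_a) x v dF :
  dd F x v dF -> dd (fun z => Diag (F z)) x v (Diag dF).
Proof.
move=> HF; apply: dd_mx => i j.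
have -> : (fun z => Diag (F z) i j) = fun z => if i == j then F z i j else 0.
  by apply/funext => z; rewrite mxE.
rewrite mxE; case: eqP => _; [exact: dd_entry | exact: dd_cst].
Qed.

Lemma dd_frob a b (F G : V -> 'M[R]_(a, b)) x v dF dG :
  dd F x v dF -> dd G x v dG ->
  dd (fun z => frob (F z) (G z)) x v (frob dF (G x) + frob (F x) dG).
Proof.
move=> HF HG; rewrite /frob.
have -> : (fun z => \tr ((F z)^T *m G z)) = fun z => \sum_i ((F z)^T *m G z) i i.
  by [].
apply: dd_eq.
  apply: (@dd_sum _ _ _ _ _ _ _ (fun i => ((dF^T *m G x + (F x)^T *m dG) i i))) => i.
  by apply: dd_entry; apply: dd_mulmx; [exact: dd_tr|exact: HG].
by rewrite /mxtrace -big_split /=; apply: eq_bigr => i _; rewrite mxE.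
Qed.

End DD2.

Section Frob.
Variable R : realType.
Implicit Types a b c : nat.

Lemma frobC a b (A B : 'M[R]_(a, b)) : frob A B = frob B A.
Proof. by rewrite /frob -mxtrace_tr trmx_mul trmxK. Qed.

Lemma frobDr a b (A B C : 'M[R]_(a, b)) : frob A (B + C) = frob A B + frob A C.
Proof. by rewrite /frob mulmxDr mxtraceD. Qed.

Lemma frobDl a b (A B C : 'M[R]_(a, b)) : frob (A + B) C = frob A C + frob B C.
Proof. by rewrite frobC frobDr !(frobC C). Qed.

Lemma frobZr a b k (A B : 'M[R]_(a, b)) : frob A (k *: B) = k * frob A B.
Proof. by rewrite /frob -scalemxAr mxtraceZ. Qed.

Lemma frobZl a b k (A B : 'M[R]_(a, b)) : frob (k *: A) B = k * frob A B.
Proof. by rewrite frobC frobZr frobC. Qed.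

Lemma frobNr a b (A B : 'M[R]_(a, b)) : frob A (- B) = - frob A B.
Proof. by rewrite -scaleN1r frobZr mulN1r. Qed.

Lemma frobNl a b (A B : 'M[R]_(a, b)) : frob (- A) B = - frob A B.
Proof. by rewrite -scaleN1r frobZl mulN1r. Qed.

Lemma frobBr a b (A B C : 'M[R]_(a, b)) : frob A (B - C) = frob A B - frob A C.
Proof. by rewrite frobDr frobNr. Qed.

Lemma frobBl a b (A B C : 'M[R]_(a, b)) : frob (A - B) C = frob A C - frob B C.
Proof. by rewrite frobDl frobNl. Qed.

Lemma frob0r a b (A : 'M[R]_(a, b)) : frob A 0 = 0.
Proof. by rewrite /frob mulmx0 mxtrace0. Qed.

Lemma frob0l a b (A : 'M[R]_(a, b)) : frob 0 A = 0.
Proof. by rewrite frobC frob0r. Qed.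

Lemma frob_mulr1 a b c (A : 'M[R]_(a, c)) (B : 'M[R]_(a, b)) (C : 'M[R]_(b, c)) :
  frob A (B *m C) = frob (B^T *m A) C.
Proof. by rewrite /frob trmx_mul trmxK mulmxA. Qed.

Lemma frob_mulr2 a b c (A : 'M[R]_(a, c)) (B : 'M[R]_(a, b)) (C : 'M[R]_(b, c)) :
  frob A (B *m C) = frob (A *m C^T) B.
Proof. by rewrite /frob trmx_mul trmxK mulmxA mxtrace_mulC mulmxA. Qed.

Lemma frob_row a b c (A C : 'M[R]_(a, b)) (B D : 'M[R]_(a, c)) :
  frob (row_mx A B) (row_mx C D) = frob A C + frob B D.
Proof.
rewrite /frob mxtrace_mulC tr_row_mx mul_row_col mxtraceD.
by rewrite !(mxtrace_mulC _ (_^T)).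
Qed.

Lemma frob_delta a b (M : 'M[R]_(a, b)) i j : frob M (delta_mx i j) = M i j.
Proof.
rewrite /frob /mxtrace (bigD1 j) //= big1 ?addr0.
  rewrite mxE (bigD1 i) //= big1 ?addr0; first by rewrite !mxE !eqxx mulr1.
  by move=> k /negbTE kn; rewrite !mxE kn mulr0.
move=> k /negbTE kn; rewrite mxE big1 // => l _.
by rewrite !mxE kn andbF mulr0.
Qed.

End Frob.

Section Calc.
Variables (R : realType) (n m q : nat) (A : 'I_m -> 'M[R]_n) (b : 'cV[R]_m)
  (C : 'M[R]_n) (sigma : R) (y : 'cV[R]_m) (Xt : 'M[R]_n).

Local Notation V := 'M[R]_(n, q).
Local Notation Ph := (Phi A b C sigma y Xt).
Local Notation GP := (gradPhi A b C sigma y Xt).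

Lemma dd_Phi (S' : V -> 'M[R]_n) x v dS :
  dd S' x v dS -> dd (fun z => Ph (S' z)) x v (frob (GP (S' x)) dS).
Proof.
move=> HS; rewrite /Phi /frobn2 /gradPhi.
apply: dd_eq.
  apply: dd_add; [apply: dd_sub|].
  - apply: dd_frob; [apply: dd_cst| apply: dd_add; [exact: HS|apply: dd_cst]].
  - apply: dd_frob; [apply: dd_cst| apply: dd_sub; [apply: dd_sub; [apply: dd_cst|exact: HS]|apply: dd_cst]].
  - apply: dd_mulR; [apply: dd_cst| apply: dd_frob];
    (apply: dd_sub; [apply: dd_sub; [apply: dd_cst|exact: HS]|apply: dd_cst]).
rewrite !frob0l !addr0 !subr0 !sub0r !add0r mulr0 addr0 !frobNl !frobNr.
rewrite (frobC dS); set f3 := frob (Astar A y - S' x - C) dS.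
rewrite !frobDl !frobNl frobZl -/f3.
set f1 := frob (Dmat A b) dS; set f2 := frob Xt dS.
by field.
Qed.

Lemma dd_GP (S' : V -> 'M[R]_n) x v dS :
  dd S' x v dS -> dd (fun z => GP (S' z)) x v (sigma *: dS).
Proof.
move=> HS; rewrite /gradPhi.
apply: dd_eq.
  apply: dd_add; [apply: dd_sub|apply: dd_cst]; first exact: dd_cst.
  apply: dd_scale; apply: dd_sub; [apply: dd_sub; [apply: dd_cst|exact: HS]|apply: dd_cst].
by rewrite !subr0 !sub0r addr0 scalerN opprK.
Qed.

Lemma dd_SS (x v : V) : dd (fun z : V => z *m z^T) x v (v *m x^T + x *m v^T).
Proof. apply: dd_mulmx; [exact: dd_id | apply: dd_tr; exact: dd_id]. Qed.

Lemma dd_proj (W : V -> V) x v dW : dd W x v dW ->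
  dd (fun z => projT z (W z)) x v
     (dW - (Diag (dW *m x^T + W x *m v^T) *m x + Diag (W x *m x^T) *m v)).
Proof.
move=> HW; rewrite /projT.
apply: dd_sub; first exact: HW.
apply: dd_mulmx; last exact: dd_id.
apply: dd_Diag; apply: dd_mulmx; [exact: HW| apply: dd_tr; exact: dd_id].
Qed.

Lemma egrad_Psi (Z : V) :
  egrad (Psi A b C sigma y Xt) Z = (GP (Z *m Z^T) + (GP (Z *m Z^T))^T) *m Z.
Proof.
apply/matrixP => i j; rewrite mxE.
rewrite (dd_D (dd_Phi (dd_SS Z (delta_mx i j)))).
rewrite frobDr frob_mulr2 frob_mulr2 trmxK frob_delta.
rewrite trmxK frobC frob_mulr1 frob_delta.
by rewrite [in X in _ = X]mulmxDl [in X in _ = X]mxE.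
Qed.

End Calc.

Lemma quad_neg (R : realType) n d (X : 'M[R]_n) (V : 'M[R]_(n, d)) :
  (0 < d)%N ->
  (forall j : 'I_d, col j V != 0 /\
     exists lam : R, lam < 0 /\ X *m col j V = lam *: col j V) ->
  frob V (X *m V) < 0.
Proof.
move=> d0 HV.
have term : forall j : 'I_d, (V^T *m (X *m V)) j j < 0.
  move=> j; have [nz [lam [lam0 Hl]]] := HV j.
  have E : forall k, (X *m V) k j = lam * V k j.
    move=> k; have := congr1 (fun M : 'M[R]_(n, 1) => M k ord0) Hl.
    by rewrite !mxE => <-; apply: eq_bigr => l _; rewrite !mxE.
  rewrite mxE (eq_bigr (fun k => lam * (V k j ^+ 2))); last first.
    by move=> k _; rewrite mxE E mulrCA expr2.
  rewrite -mulr_sumr nmulr_rlt0 // lt_def (sumr_ge0 _ (fun k _ => sqr_ge0 _)) andbT.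
  apply/eqP => /psumr_eq0P H; apply/negP: nz; rewrite negbK; apply/eqP/matrixP => k l.
  rewrite !mxE; apply/eqP; rewrite -sqrf_eq0; apply/eqP.
  by apply: H => // i _; exact: sqr_ge0.
rewrite /frob /mxtrace; case: d d0 V HV term => // d _ V HV term.
rewrite big_ord_recl; apply: (lt_le_trans (y := 0 + 0)); last by rewrite addr0.
apply: ltr_leD; first exact: term.
by apply: sumr_le0 => i _; apply: ltW; apply: term.
Qed.

Lemma DiagD (R : realType) n (M N : 'M[R]_n) : Diag (M + N) = Diag M + Diag N.
Proof. by apply/matrixP => i j; rewrite !mxE; case: eqP => _; rewrite ?addr0. Qed.

Lemma trZ (R : realType) a c (k : R) (M : 'M[R]_(a, c)) : (k *: M)^T = k *: M^T.
Proof. by apply/matrixP => i j; rewrite !mxE. Qed.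
Lemma trD (R : realType) a c (M N : 'M[R]_(a, c)) : (M + N)^T = M^T + N^T.
Proof. by apply/matrixP => i j; rewrite !mxE. Qed.
Lemma trN (R : realType) a c (M : 'M[R]_(a, c)) : (- M)^T = - M^T.
Proof. by apply/matrixP => i j; rewrite !mxE. Qed.

Lemma Astar_sym (R : realType) n m (A : 'I_m -> 'M[R]_n) y :
  (forall i, symmx (A i)) -> (Astar A y)^T = Astar A y.
Proof.
move=> As; rewrite /Astar; apply/matrixP => i j; rewrite mxE !summxE.
by apply: eq_bigr => k _; rewrite !mxE -[in RHS](As k) mxE.
Qed.

Unset Implicit Arguments.

Theorem theorem4p5 (R : realType) (n m : nat) (A : 'I_m -> 'M[R]_n)
  (b : 'cV[R]_m) (C : 'M[R]_n) (sigma : R) (y : 'cV[R]_m) (Xt : 'M[R]_n)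
  (p delta : nat) (Y : 'M[R]_(n, p)) (V : 'M[R]_(n, delta)) :
  (0 < n)%N -> (0 < m)%N ->
  (forall i, symmx (A i)) -> AAstar A \in unitmx ->
  symmx C -> 0 < sigma -> symmx Xt ->
  (0 < p)%N -> oblique Y ->
  let S := Y *m Y^T in
  let G := gradPhi A b C sigma y Xt S in
  let X := G - Diag (G *m S) in
  ~ psd X ->
  (0 < delta)%N ->
  (forall j : 'I_delta, col j V != 0 /\
     exists lam : R, lam < 0 /\ X *m col j V = lam *: col j V) ->
  let Yhat : 'M[R]_(n, p + delta) := row_mx Y 0 in
  let U : 'M[R]_(n, p + delta) := row_mx 0 V in
  let Psik := Psi (q := (p + delta)%N) A b C sigma y Xt in
  oblique Yhat /\ tangent Yhat U /\
  frob U (rgrad Psik Yhat) = 0 /\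
  frob U (rhess Psik Yhat U) < 0.
Proof.
move=> n0 m0 As AAu Cs sig0 Xts p0 Yob S G X npsd d0 HV Yhat U Psik.
have UY : U *m Yhat^T = 0.
  by rewrite /U /Yhat tr_row_mx mul_row_col trmx0 mul0mx mulmx0 addr0.
have YY : Yhat *m Yhat^T = S.
  by rewrite /Yhat /S tr_row_mx mul_row_col trmx0 mulmx0 addr0.
have fUY : forall K : 'M[R]_n, frob U (K *m Yhat) = 0.
  by move=> K; rewrite frob_mulr2 UY frob0l.
have Gs : G^T = G.
  rewrite /G /gradPhi /Dmat !trD !trN !trZ !trD !trN.
  by rewrite !Astar_sym // Xts Cs /S trmx_mul trmxK.
split.
  move=> i; rewrite big_split_ord /=.
  rewrite (eq_bigr (fun j => Y i j ^+ 2)); last by move=> j _; rewrite row_mxEl.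
  rewrite Yob big1 ?addr0 // => j _; by rewrite row_mxEr mxE expr0n.
split; first by move=> i; rewrite UY mxE.
split.
  by rewrite /rgrad /Psik egrad_Psi /projT frobBr fUY fUY subr0.
rewrite /rhess.
have -> : (fun Z => projT Z (egrad Psik Z)) =
   (fun Z => projT Z ((gradPhi A b C sigma y Xt (Z *m Z^T) +
                       (gradPhi A b C sigma y Xt (Z *m Z^T))^T) *m Z)).
  by apply/funext => Z; rewrite /Psik egrad_Psi.
have HD := dd_proj (dd_mulmx (dd_add (dd_GP A b C sigma y Xt (dd_SS Yhat U))
   (dd_tr (dd_GP A b C sigma y Xt (dd_SS Yhat U)))) (dd_id Yhat U)).
rewrite (dd_D HD) /projT frobBr fUY subr0 frobBr frobDr fUY add0r frobDr fUY add0r.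
rewrite YY -/G Gs -mulmxA YY.
have E : frob U ((G + G) *m U) - frob U (Diag ((G + G) *m S) *m U) = 2 * frob U (X *m U).
  rewrite /X mulmxBl frobBr !mulmxDl DiagD mulmxDl !frobDr; lra.
rewrite E pmulr_rlt0 // /U mul_mx_row mulmx0 frob_row frob0l add0r.
exact: quad_neg.
Qed.
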